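(* Let $\Pi\subset\mathbb R^2$ be a convex polygon with vertex set $V=\{\mathbf v_1,\dots,\mathbf v_n\}$ ($n\ge3$, listed counterclockwise, all extreme points), and let $\delta$ be a chordal decomposition of $\Pi$ with triangle set $T_\delta$. Then for every $a\in\Pi$: (a) $\sum_{v\in V}\langle a|v\rangle_\delta=1$; (b) $a=\sum_{v\in V}\langle a|v\rangle_\delta\, v$.
   Context: A chord is a segment joining two vertices of $\Pi$ that are not adjacent on the boundary. A chordal decomposition $\delta$ is a set of $n-3$ pairwise non-crossing chords; they decompose $\Pi$ as a union of $n-2$ closed triangles (regions) whose vertices are vertices of $\Pi$; $T_\delta$ is the set of these triangles. For a triangle $\tau$ with vertices $u_0,u_1,u_2$ in counterclockwise order (indices mod 3), the areal coordinate function is $\langle x|u_i\rangle_\tau=A(u_{i-1},x,u_{i+1})/A(u_0,u_1,u_2)$ for $x\in\Pi$, where $A(\mathbf p,\mathbf q,\mathbf r)=\tfrac12\det[\mathbf q-\mathbf p,\mathbf r-\mathbf p]$. For a subset $X\subseteq\Pi$, $\mathds 1_X$ is its indicator function. Chordal coordinate function: for a vertex $v$, let $\tau_1,\dots,\tau_r$ be an enumeration of the triangles of $T_\delta$ containing $v$; set $F_0=0$ and $F_k=F_{k-1}+\mathds 1_{\tau_k}\cdot\langle\cdot|v\rangle_{\tau_k}-\mathds 1_{\tau_k\cap(\tau_1\cup\dots\cup\tau_{k-1})}\cdot\langle\cdot|v\rangle_{\tau_k}$ (pointwise operations on functions $\Pi\to\mathbb R$); then $\langle a|v\rangle_\delta=F_r(a)$.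 *)

(* Defs.v *)
From HB Require Import structures.
From mathcomp Require Import all_boot all_order all_algebra.
From mathcomp Require Import boolp.
Set Implicit Arguments. Unset Strict Implicit. Unset Printing Implicit Defensive.
Import Order.TTheory GRing.Theory Num.Theory.
Local Open Scope ring_scope.

Section Defs.
Variable R : realFieldType.
Notation pt := 'rV[R]_2.

Definition area (p q r : pt) : R := 2^-1 * \det (col_mx (q - p) (r - p) : 'M_2).

Definition conv_hull (m : nat) (u : 'I_m -> pt) : pt -> Prop :=
  fun x => exists l : 'I_m -> R,
    (forall i, 0 <= l i) /\ \sum_i l i = 1 /\ x = \sum_i l i *: u i.

Definition segment (p q : pt) : pt -> Prop :=
  fun x => exists t : R, 0 <= t <= 1 /\ x = (1 - t) *: p + t *: q.

Variable n : nat.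
Variable v : 'I_n -> pt.

(* v_0,...,v_{n-1} are the vertices of a convex polygon, listed counterclockwise,
   all of them extreme points *)
Definition ccw_convex_position : Prop :=
  forall i j k : 'I_n, (i < j)%N -> (j < k)%N -> 0 < area (v i) (v j) (v k).

Definition polygon : pt -> Prop := conv_hull v.

Definition adjacent (i j : 'I_n) : bool :=
  (j == (i.+1 %% n)%N :> nat) || (i == (j.+1 %% n)%N :> nat).

Definition is_chord (c : 'I_n * 'I_n) : bool :=
  (c.1 < c.2)%N && ~~ adjacent c.1 c.2.

Definition chord_seg (c : 'I_n * 'I_n) : pt -> Prop := segment (v c.1) (v c.2).

Definition is_endpoint (m : 'I_n) (c : 'I_n * 'I_n) : bool := (m == c.1) || (m == c.2).

Definition non_crossing (c1 c2 : 'I_n * 'I_n) : Prop :=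
  forall x, chord_seg c1 x -> chord_seg c2 x ->
    exists m : 'I_n, [&& is_endpoint m c1 & is_endpoint m c2] /\ x = v m.

Definition chordal_decomposition (delta : {set 'I_n * 'I_n}) : Prop :=
  #|delta| = (n - 3)%N /\
  (forall c, c \in delta -> is_chord c) /\
  (forall c1 c2, c1 \in delta -> c2 \in delta -> c1 != c2 -> non_crossing c1 c2).

Definition dec_edge (delta : {set 'I_n * 'I_n}) (i j : 'I_n) : bool :=
  adjacent i j || ((i < j)%N && ((i, j) \in delta)) || ((j < i)%N && ((j, i) \in delta)).

(* a triangle (with vertices given by indices i < j < k, hence counterclockwise) *)
Definition tri := ('I_n * 'I_n * 'I_n)%type.

Definition in_T (delta : {set 'I_n * 'I_n}) (t : tri) : bool :=
  let: (i, j, k) := t in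
  [&& (i < j)%N, (j < k)%N, dec_edge delta i j, dec_edge delta j k & dec_edge delta i k].

Definition tri_set (t : tri) : pt -> Prop :=
  let: (i, j, k) := t in
  conv_hull (fun l : 'I_3 => [:: v i; v j; v k]`_l).

Definition areal (t : tri) (m : 'I_n) (x : pt) : R :=
  let: (i, j, k) := t in
  let D := area (v i) (v j) (v k) in
  if m == i then area (v k) x (v j) / D
  else if m == j then area (v i) x (v k) / D
  else if m == k then area (v j) x (v i) / D
  else 0.

Definition ind (P : pt -> Prop) (x : pt) : R := (`[< P x >])%:R.

(* F_k = F_{k-1} + 1_{t_k} <.|v>_{t_k} - 1_{t_k /\ (t_1 \/ ... \/ t_{k-1})} <.|v>_{t_k};
   [prev] is the list t_1 ... t_{k-1} already processed *)
Fixpoint chordal_aux (m : 'I_n) (prev s : seq tri) (a : pt) : R :=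
  match s with
  | [::] => 0
  | t :: s' =>
      chordal_aux m (rcons prev t) s' a
      + (ind (tri_set t) a * areal t m a
         - ind (fun y => tri_set t y /\ exists2 t', t' \in prev & tri_set t' y) a
           * areal t m a)
  end.

Definition chordal_coord (m : 'I_n) (enum : seq tri) (a : pt) : R :=
  chordal_aux m [::] enum a.

Definition enumerates (delta : {set 'I_n * 'I_n}) (m : 'I_n) (e : seq tri) : Prop :=
  uniq e /\ forall t, t \in e <-> (in_T delta t /\ tri_set t (v m)).

End Defs.

(* Main.v *)
Require Import Defs.
From HB Require Import structures.
From mathcomp Require Import all_boot all_order all_algebra.
From mathcomp Require Import boolp.
From mathcomp Require Import ring lra zify.
Set Implicit Arguments. Unset Strict Implicit. Unset Printing Implicit Defensive.
Import Order.TTheory GRing.Theory Num.Theory.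
Local Open Scope ring_scope.

Section Geo.
Variable R : realFieldType.
Notation pt := 'rV[R]_2.

Lemma det2E (M : 'M[R]_2) : \det M = M 0 0 * M 1 1 - M 0 1 * M 1 0.
Proof.
rewrite (expand_det_row _ 0) !big_ord_recr big_ord0 /= add0r.
rewrite /cofactor !det_mx11 !mxE /=.
have -> : (lift 0 (0 : 'I_1)) = 1 by apply/val_inj.
have -> : (lift (@ord_max 1) (0 : 'I_1)) = 0 by apply/val_inj.
have -> : (lift (widen_ord (leqnSn 1) ord_max) (0 : 'I_1)) = 1 by apply/val_inj.
have -> : (widen_ord (leqnSn 1) (@ord_max 0)) = 0 by apply/val_inj.
rewrite /=. rewrite expr0 expr1.
have -> : (@ord_max 1) = 1 by apply/val_inj.
ring.
Qed.

Lemma areaE (p q r : pt) : area p q r =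
  2^-1 * ((q 0 0 - p 0 0) * (r 0 1 - p 0 1) - (q 0 1 - p 0 1) * (r 0 0 - p 0 0)).
Proof.
rewrite /area det2E.
have hu : forall j, col_mx (q - p) (r - p) 0 j = (q - p) 0 j.
  by move=> j; rewrite -(col_mxEu (q - p) (r - p) 0 j); congr (col_mx _ _ _ _); apply/val_inj.
have hd : forall j, col_mx (q - p) (r - p) 1 j = (r - p) 0 j.
  by move=> j; rewrite -(col_mxEd (q - p) (r - p) 0 j); congr (col_mx _ _ _ _); apply/val_inj.
rewrite !hu !hd !mxE.
ring.
Qed.

Lemma rv2_eq (x y : pt) : x 0 0 = y 0 0 -> x 0 1 = y 0 1 -> x = y.
Proof.
move=> h0 h1; apply/matrixP => i j; rewrite ord1.
case: j => [[|[|k]] Hk] //.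
- by rewrite (_ : Ordinal Hk = 0) //; apply/val_inj.
- by rewrite (_ : Ordinal Hk = 1) //; apply/val_inj.
Qed.

Lemma area_cyc (p q r : pt) : area p q r = area q r p.
Proof. rewrite !areaE; ring. Qed.
Lemma area_swap (p q r : pt) : area p r q = - area p q r.
Proof. rewrite !areaE; ring. Qed.

Lemma area_lin (p q : pt) : exists A B C, forall x : pt, area p x q = A * x 0 0 + B * x 0 1 + C.
Proof.
exists (2^-1 * (q 0 1 - p 0 1)), (- 2^-1 * (q 0 0 - p 0 0)),
  (2^-1 * (- p 0 0 * (q 0 1 - p 0 1) + p 0 1 * (q 0 0 - p 0 0))).
move=> x; rewrite areaE; ring.
Qed.

Lemma area_aff (I : finType) (l : I -> R) (u : I -> pt) (p q : pt) :
  \sum_i l i = 1 -> area p (\sum_i l i *: u i) q = \sum_i l i * area p (u i) q.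
Proof.
move=> hs; have [A [B [C hA]]] := area_lin p q.
rewrite hA !summxE.
rewrite [RHS](eq_bigr (fun i => A * (l i * u i 0 0) + B * (l i * u i 0 1) + C * l i)); last first.
  by move=> i _; rewrite hA; ring.
rewrite !big_split /= -!mulr_sumr hs mulr1.
by congr (A * _ + B * _ + _); apply: eq_bigr => i _; rewrite mxE.
Qed.
End Geo.

Section Poly.
Variable R : realFieldType.
Variable n : nat.
Variable v : 'I_n -> 'rV[R]_2.
Hypothesis hccw : ccw_convex_position v.

Lemma sum_delta (V : zmodType) (F : 'I_n -> V) (i : 'I_n) :
  \sum_m (if m == i then F m else 0) = F i.
Proof. by rewrite -big_mkcond big_pred1_eq. Qed.

Lemma sum3 (V : nmodType) (F : 'I_3 -> V) : \sum_i F i = F 0 + F 1 + F ord_max.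
Proof.
rewrite !big_ord_recr big_ord0 /= add0r; congr (F _ + F _ + _); exact/val_inj.
Qed.

Lemma tri_bary (i j k : 'I_n) a : tri_set v (i, j, k) a ->
  exists l0 l1 l2 : R, [/\ 0 <= l0, 0 <= l1, 0 <= l2, l0 + l1 + l2 = 1 &
     a = l0 *: v i + l1 *: v j + l2 *: v k].
Proof.
case=> l [hl [hs ->]].
exists (l 0), (l 1), (l ord_max); split => //.
  by move: hs; rewrite sum3.
by rewrite sum3.
Qed.

Lemma areal_bary (i j k : 'I_n) a l0 l1 l2 :
  (i < j)%N -> (j < k)%N -> l0 + l1 + l2 = 1 ->
  a = l0 *: v i + l1 *: v j + l2 *: v k ->
  forall m, areal v (i, j, k) m a =
    (if m == i then l0 else 0) + (if m == j then l1 else 0) + (if m == k then l2 else 0).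
Proof.
move=> hij hjk hs ha m.
have hD : 0 < area (v i) (v j) (v k) by apply: hccw.
have hD0 : area (v i) (v j) (v k) != 0 by rewrite gt_eqF.
have hl2 : l2 = 1 - l0 - l1 by rewrite -hs; ring.
have nij : (i == j) = false by apply/negbTE; rewrite neq_ltn hij.
have njk : (j == k) = false by apply/negbTE; rewrite neq_ltn hjk.
have nik : (i == k) = false by apply/negbTE; rewrite neq_ltn (ltn_trans hij hjk).
rewrite /areal; case: (eqVneq m i) => [->|hmi].
  rewrite nij nik !addr0; apply: (canLR (mulfK hD0)).
  move: hD0; rewrite ha hl2 !areaE !mxE => _; ring.
case: (eqVneq m j) => [->|hmj].
  rewrite njk add0r addr0; apply: (canLR (mulfK hD0)).
  move: hD0; rewrite ha hl2 !areaE !mxE => _; ring.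
case: (eqVneq m k) => [_|hmk]; last by rewrite !addr0.
rewrite !add0r; apply: (canLR (mulfK hD0)).
move: hD0; rewrite ha hl2 !areaE !mxE => _; ring.
Qed.


Lemma if_scale (b : bool) (x : R) (w : 'rV[R]_2) :
  (if b then x else 0) *: w = if b then x *: w else 0.
Proof. by case: b; rewrite ?scale0r. Qed.

Lemma areal_props (i j k : 'I_n) a : (i < j)%N -> (j < k)%N -> tri_set v (i, j, k) a ->
 [/\ forall m, 0 <= areal v (i, j, k) m a,
     \sum_m areal v (i, j, k) m a = 1,
     \sum_m areal v (i, j, k) m a *: v m = a &
     forall m, areal v (i, j, k) m a != 0 -> [|| m == i, m == j | m == k]].
Proof.
move=> hij hjk /tri_bary [l0 [l1 [l2 [h0 h1 h2 hs ha]]]].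
have E := areal_bary hij hjk hs ha.
split.
- move=> m; rewrite E.
  by apply: addr_ge0; [apply: addr_ge0|]; case: ifP.
- under eq_bigr do rewrite E.
  by rewrite !big_split /= !sum_delta.
- under eq_bigr do rewrite E !scalerDl !if_scale.
  rewrite !big_split /=.
  by rewrite (sum_delta (fun m => l0 *: v m)) (sum_delta (fun m => l1 *: v m))
    (sum_delta (fun m => l2 *: v m)).
- move=> m; rewrite E.
  by case: (m == i); case: (m == j); case: (m == k); rewrite //= !addr0 eqxx.
Qed.

Lemma tri_vert (i j k : 'I_n) :
  [/\ tri_set v (i, j, k) (v i), tri_set v (i, j, k) (v j) & tri_set v (i, j, k) (v k)].
Proof.
split.
- exists (fun t : 'I_3 => (t == 0)%:R); split; first by move=> t; rewrite ler0n.
  by rewrite !sum3 /= ; split; [rewrite addr0 addr0 | rewrite !scale1r !scale0r !addr0].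
- exists (fun t : 'I_3 => (t == 1)%:R); split; first by move=> t; rewrite ler0n.
  by rewrite !sum3 /= ; split; [rewrite addr0 add0r | rewrite !scale1r !scale0r addr0 add0r].
- exists (fun t : 'I_3 => (t == ord_max)%:R); split; first by move=> t; rewrite ler0n.
  by rewrite !sum3 /= ; split; [rewrite !add0r | rewrite !scale1r !scale0r !add0r].
Qed.


Lemma sum_two (V : nmodType) (F : 'I_n -> V) (p q : 'I_n) : p != q ->
  (forall m, m != p -> m != q -> F m = 0) -> \sum_m F m = F p + F q.
Proof.
move=> hpq hF; rewrite (bigD1 p) //= (bigD1 q) /=; last by rewrite eq_sym.
by rewrite big1 ?addr0 // => m /andP [hq hp]; apply: hF.
Qed.

Lemma consist_gen (L M : 'I_n -> R) a (p q : 'I_n) :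
  p != q -> v p != v q ->
  (forall m, 0 <= L m) -> \sum_m L m = 1 -> \sum_m L m *: v m = a ->
  (forall m, 0 <= M m) -> \sum_m M m = 1 -> \sum_m M m *: v m = a ->
  (forall m, L m != 0 -> area (v p) (v m) (v q) <= 0 /\
       (area (v p) (v m) (v q) = 0 -> m = p \/ m = q)) ->
  (forall m, M m != 0 -> 0 <= area (v p) (v m) (v q) /\
       (area (v p) (v m) (v q) = 0 -> m = p \/ m = q)) ->
  forall m, L m = M m.
Proof.
move=> hpq hvpq L0 L1 La M0 M1 Ma HL HM.
pose f m := area (v p) (v m) (v q).
have fL : area (v p) a (v q) = \sum_m L m * f m by rewrite -La area_aff.
have fM : area (v p) a (v q) = \sum_m M m * f m by rewrite -Ma area_aff.
have tL : forall m, L m * f m <= 0.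
  move=> m; case: (eqVneq (L m) 0) => [->|/HL [h _]]; first by rewrite mul0r.
  by rewrite mulr_ge0_le0.
have tM : forall m, 0 <= M m * f m.
  move=> m; case: (eqVneq (M m) 0) => [->|/HM [h _]]; first by rewrite mul0r.
  by rewrite mulr_ge0.
have s1 : \sum_m L m * f m <= 0 by rewrite -oppr_ge0 -sumrN; apply: sumr_ge0 => m _; rewrite oppr_ge0.
have s2 : 0 <= \sum_m M m * f m by apply: sumr_ge0.
have z : area (v p) a (v q) = 0.
  by apply/eqP; rewrite eq_le; apply/andP; split; [rewrite fL | rewrite fM].
have zL : forall m, L m != 0 -> m = p \/ m = q.
  move=> m hm; have [_ h] := HL m hm; apply: h.
  have : \sum_m - (L m * f m) = 0 by rewrite sumrN -fL z oppr0.
  have tL' : forall i, true -> 0 <= - (L i * f i) by move=> i _; rewrite oppr_ge0.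
  move/psumr_eq0P => /(_ tL') h2.
  by have := h2 m isT; move/eqP; rewrite oppr_eq0 mulf_eq0 (negbTE hm) => /eqP.
have zM : forall m, M m != 0 -> m = p \/ m = q.
  move=> m hm; have [_ h] := HM m hm; apply: h.
  have : \sum_m (M m * f m) = 0 by rewrite -fM z.
  move/psumr_eq0P => /(_ (fun i _ => tM i)) h2.
  by have := h2 m isT; move/eqP; rewrite mulf_eq0 (negbTE hm) => /eqP.
have Lout : forall m, m != p -> m != q -> L m = 0.
  move=> m h1 h2; apply/eqP/negP => /negP/zL [] /eqP; by rewrite ?(negbTE h1) ?(negbTE h2).
have Mout : forall m, m != p -> m != q -> M m = 0.
  move=> m h1 h2; apply/eqP/negP => /negP/zM [] /eqP; by rewrite ?(negbTE h1) ?(negbTE h2).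
rewrite (sum_two hpq Lout) in L1.
rewrite (sum_two hpq Mout) in M1.
rewrite (sum_two (F := fun m => L m *: v m) hpq) in La; last by move=> m h1 h2; rewrite Lout ?scale0r.
rewrite (sum_two (F := fun m => M m *: v m) hpq) in Ma; last by move=> m h1 h2; rewrite Mout ?scale0r.
have ep : L p = M p.
  have : (L p - M p) *: (v p - v q) = 0.
    have eL : L q = 1 - L p by rewrite -L1; ring.
    have eM : M q = 1 - M p by rewrite -M1; ring.
    rewrite eL eM in La Ma.
    apply/rowP => k; move/rowP: La => /(_ k); move/rowP: Ma => /(_ k); rewrite !mxE.
    move=> h1 h2; rewrite -h2 in h1. rewrite mulrBl !mulrBr. 
    move: h1; set A := a 0 k; rewrite /= => h1. lra.
  by move/eqP; rewrite scaler_eq0 !subr_eq0 (negbTE hvpq) orbF => /eqP.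
have eq : L q = M q by lra.
move=> m; case: (eqVneq m p) => [->//|h1]; case: (eqVneq m q) => [->//|h2].
by rewrite Lout // Mout.
Qed.


Lemma ccw_pos (a b c : 'I_n) : (a < b)%N -> (b < c)%N -> 0 < area (v a) (v b) (v c).
Proof. exact: hccw. Qed.

Lemma cross (a b c d : 'I_n) : (a < c)%N -> (c < b)%N -> (b < d)%N ->
  exists x, chord_seg v (a, b) x /\ chord_seg v (c, d) x.
Proof.
move=> hac hcb hbd.
have hal : 0 < area (v c) (v d) (v a).
  by rewrite -area_cyc; apply: ccw_pos => //; apply: ltn_trans hbd.
have hbe : 0 < - area (v c) (v d) (v b).
  by rewrite -area_swap; apply: ccw_pos.
have hga : 0 < - area (v a) (v b) (v c).
  by rewrite -area_swap; apply: ccw_pos.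
have hde : 0 < area (v a) (v b) (v d).
  by apply: ccw_pos => //; apply: ltn_trans hcb.
set al := area (v c) (v d) (v a) in hal.
set be := - area (v c) (v d) (v b) in hbe.
set ga := - area (v a) (v b) (v c) in hga.
set de := area (v a) (v b) (v d) in hde.
have n1 : al + be != 0 by rewrite gt_eqF // addr_gt0.
have n2 : ga + de != 0 by rewrite gt_eqF // addr_gt0.
exists ((1 - al / (al + be)) *: v a + (al / (al + be)) *: v b); split.
  exists (al / (al + be)); split => //.
  apply/andP; split; first by rewrite divr_ge0 // ltW // addr_gt0.
  by rewrite ler_pdivrMr ?addr_gt0 // mul1r lerDl ltW.
exists (ga / (ga + de)); split.
  apply/andP; split; first by rewrite divr_ge0 // ltW // addr_gt0.
  by rewrite ler_pdivrMr ?addr_gt0 // mul1r lerDl ltW.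
move: n1 n2; rewrite /al /be /ga /de !areaE => n1 n2.
apply: rv2_eq; rewrite !mxE /=; field;
  apply/eqP => h; first [move/eqP: n1; apply; lra | move/eqP: n2; apply; lra].
Qed.


Variable delta : {set 'I_n * 'I_n}.
Hypothesis hdec : chordal_decomposition v delta.

Lemma adj_cases (a b : 'I_n) : (a < b)%N -> adjacent a b ->
  (b = a.+1 :> nat) \/ (a = 0 :> nat /\ b = n.-1 :> nat).
Proof.
move=> hab; have ha := ltn_ord a; have hb := ltn_ord b.
rewrite /adjacent; case/orP => /eqP.
- case: (ltngtP a.+1 n) => h; first by rewrite modn_small //; left.
  + lia.
  + by rewrite h modnn => hb0; move: hab; rewrite hb0.
- case: (ltngtP b.+1 n) => h.
  + rewrite modn_small // => e; lia.
  + lia.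
  + rewrite h modnn => e; right; split => //; lia.
Qed.

Lemma dec_edgeC (a b : 'I_n) : dec_edge delta a b = dec_edge delta b a.
Proof.
rewrite /dec_edge /adjacent.
by rewrite (orbC (b == _ :> nat)) -orbA (orbC ((a < b)%N && _)) orbA.
Qed.

Lemma dec_lt (a b : 'I_n) : (a < b)%N -> dec_edge delta a b -> adjacent a b \/ (a, b) \in delta.
Proof.
move=> hab; rewrite /dec_edge hab /= ltnNge (ltnW hab) /= orbF.
by case/orP; [left|right].
Qed.

Lemma NI (a b c d : 'I_n) : dec_edge delta a b -> dec_edge delta c d ->
  (a < c)%N -> (c < b)%N -> (b < d)%N -> False.
Proof.
move=> e1 e2 hac hcb hbd.
have hab : (a < b)%N by apply: ltn_trans hcb.
have hcd : (c < d)%N by apply: ltn_trans hbd.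
have hd := ltn_ord d.
case: (dec_lt hab e1) => [/(adj_cases hab)|h1]; first lia.
case: (dec_lt hcd e2) => [/(adj_cases hcd)|h2]; first lia.
have [x [x1 x2]] := cross hac hcb hbd.
have [_ [_ hnc]] := hdec.
have hne : (a, b) != (c, d).
  apply/eqP => -[e _]; by move: hac; rewrite e ltnn.
have [m [/andP [m1 m2] _]] := hnc _ _ h1 h2 hne x x1 x2.
move: m1 m2; rewrite /is_endpoint /= => /orP [] /eqP -> /orP [] /eqP /(congr1 (@nat_of_ord n)) /= e; lia.
Qed.


Lemma arc_in (x y s s' : 'I_n) : dec_edge delta x y -> dec_edge delta s s' ->
  (x < s)%N -> (s < y)%N -> (x <= s' <= y)%N.
Proof.
move=> exy ess h1 h2; apply/negPn/negP; rewrite negb_and -!ltnNge => /orP [] h3.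
- by apply: (NI (a := s') (b := s) (c := x) (d := y)) => //; rewrite dec_edgeC.
- by apply: (NI (a := x) (b := y) (c := s) (d := s')).
Qed.

Lemma arc_out (i k s s' : 'I_n) : dec_edge delta i k -> dec_edge delta s s' ->
  (s < i)%N || (k < s)%N -> (i < s')%N -> (s' < k)%N -> False.
Proof.
move=> eik ess /orP [] h1 h2 h3.
- by apply: (NI (a := s) (b := s') (c := i) (d := k)).
- by apply: (NI (a := i) (b := k) (c := s') (d := s)) => //; rewrite dec_edgeC.
Qed.

Lemma arcs (i j k i' j' k' : 'I_n) : in_T delta (i, j, k) -> in_T delta (i', j', k') ->
  (i, j, k) != (i', j', k') ->
  [\/ (i <= i')%N && (k' <= j)%N, (j <= i')%N && (k' <= k)%N |
      [&& ((k <= i')%N || (i' <= i)%N), ((k <= j')%N || (j' <= i)%N) &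
          ((k <= k')%N || (k' <= i)%N)]].
Proof.
case/and5P => hij hjk eij ejk eik; case/and5P => hij' hjk' eij' ejk' eik'.
have eji' := eij'; rewrite dec_edgeC in eji'.
have ekj' := ejk'; rewrite dec_edgeC in ekj'.
have eki' := eik'; rewrite dec_edgeC in eki'.
move=> hne.
case: (boolP ((i < i')%N && (i' < j)%N)) => [/andP [h1 h2]|n1].
  have := arc_in eij eij' h1 h2; have := arc_in eij eik' h1 h2.
  move=> /andP [f1 f2] /andP [f3 f4]; constructor 1; apply/andP; split; clear -h1 h2 f1 f2 f3 f4 hij' hjk'; lia.
case: (boolP ((i < j')%N && (j' < j)%N)) => [/andP [h1 h2]|n2].
  have := arc_in eij eji' h1 h2; have := arc_in eij ejk' h1 h2.
  move=> /andP [f1 f2] /andP [f3 f4]; constructor 1; apply/andP; split; clear -h1 h2 f1 f2 f3 f4 hij' hjk'; lia.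
case: (boolP ((i < k')%N && (k' < j)%N)) => [/andP [h1 h2]|n3].
  have := arc_in eij eki' h1 h2; have := arc_in eij ekj' h1 h2.
  move=> /andP [f1 f2] /andP [f3 f4]; constructor 1; apply/andP; split; clear -h1 h2 f1 f2 f3 f4 hij' hjk'; lia.
case: (boolP ((j < i')%N && (i' < k)%N)) => [/andP [h1 h2]|n4].
  have := arc_in ejk eij' h1 h2; have := arc_in ejk eik' h1 h2.
  move=> /andP [f1 f2] /andP [f3 f4]; constructor 2; apply/andP; split; clear -h1 h2 f1 f2 f3 f4 hij' hjk'; lia.
case: (boolP ((j < j')%N && (j' < k)%N)) => [/andP [h1 h2]|n5].
  have := arc_in ejk eji' h1 h2; have := arc_in ejk ejk' h1 h2.
  move=> /andP [f1 f2] /andP [f3 f4]; constructor 2; apply/andP; split; clear -h1 h2 f1 f2 f3 f4 hij' hjk'; lia.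
case: (boolP ((j < k')%N && (k' < k)%N)) => [/andP [h1 h2]|n6].
  have := arc_in ejk eki' h1 h2; have := arc_in ejk ekj' h1 h2.
  move=> /andP [f1 f2] /andP [f3 f4]; constructor 2; apply/andP; split; clear -h1 h2 f1 f2 f3 f4 hij' hjk'; lia.
have o1 : forall s s', dec_edge delta s s' -> (s < i)%N || (k < s)%N ->
    (s' <= i)%N || (k <= s')%N.
  move=> s s' e hs; apply/negPn/negP; rewrite negb_or -!ltnNge => /andP [h1 h2].
  exact: arc_out eik e hs h1 h2.
case: (boolP ((i' < i)%N || (k < i')%N)) => [h|n7].
  have := o1 _ _ eij' h; have := o1 _ _ eik' h.
  move=> f1 f2; constructor 3; apply/and3P; split; clear -h f1 f2 hij' hjk' hij hjk; lia.
case: (boolP ((j' < i)%N || (k < j')%N)) => [h|n8].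
  have := o1 _ _ eji' h; have := o1 _ _ ejk' h.
  move=> f1 f2; constructor 3; apply/and3P; split; clear -h f1 f2 hij' hjk' hij hjk; lia.
case: (boolP ((k' < i)%N || (k < k')%N)) => [h|n9].
  have := o1 _ _ eki' h; have := o1 _ _ ekj' h.
  move=> f1 f2; constructor 3; apply/and3P; split; clear -h f1 f2 hij' hjk' hij hjk; lia.
move: n1 n2 n3 n4 n5 n6 n7 n8 n9; rewrite !negb_and !negb_or -!leqNgt => n1 n2 n3 n4 n5 n6 n7 n8 n9.
exfalso; move/eqP: hne; apply.
have [e1 [e2 e3]] : i = i' /\ j = j' /\ k = k'.
  clear -n1 n2 n3 n4 n5 n6 n7 n8 n9 hij hjk hij' hjk'.
  have [a1 [a2 a3]] : (i = i' :> nat) /\ (j = j' :> nat) /\ (k = k' :> nat) by lia.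
  by split; [|split]; apply: ord_inj.
by rewrite e1 e2 e3.
Qed.


Lemma area_pp (p q : 'rV[R]_2) : area p p q = 0.
Proof. rewrite areaE; ring. Qed.
Lemma area_qq (p q : 'rV[R]_2) : area p q q = 0.
Proof. rewrite areaE; ring. Qed.

Lemma HL_gen (p q r m : 'I_n) : 0 < area (v p) (v q) (v r) ->
  [|| m == p, m == q | m == r] ->
  area (v p) (v m) (v q) <= 0 /\ (area (v p) (v m) (v q) = 0 -> m = p \/ m = q).
Proof.
move=> hD /or3P [] /eqP ->.
- by rewrite area_pp; split => // _; left.
- by rewrite area_qq; split => // _; right.
- rewrite area_swap; split; first by rewrite oppr_le0 ltW.
  by move/eqP; rewrite oppr_eq0 gt_eqF.
Qed.

Lemma side1 (x y s : 'I_n) : (x <= s <= y)%N ->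
  0 <= area (v x) (v s) (v y) /\ (area (v x) (v s) (v y) = 0 -> s = x \/ s = y).
Proof.
move=> /andP [h1 h2].
case: (eqVneq s x) => [->|n1]; first by rewrite area_pp; split => // _; left.
case: (eqVneq s y) => [->|n2]; first by rewrite area_qq; split => // _; right.
have l1 : (x < s)%N by rewrite ltn_neqAle eq_sym n1.
have l2 : (s < y)%N by rewrite ltn_neqAle n2.
have := ccw_pos l1 l2 => h; split; first exact: ltW.
by move=> e; move: h; rewrite e ltxx.
Qed.

Lemma side3 (i k s : 'I_n) : (i < k)%N -> (k <= s)%N || (s <= i)%N ->
  0 <= area (v k) (v s) (v i) /\ (area (v k) (v s) (v i) = 0 -> s = k \/ s = i).
Proof.
move=> hik hs.
case: (eqVneq s k) => [->|n1]; first by rewrite area_pp; split => // _; left.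
case: (eqVneq s i) => [->|n2]; first by rewrite area_qq; split => // _; right.
have h : 0 < area (v k) (v s) (v i).
  case/orP: hs => hs.
  - have l : (k < s)%N by rewrite ltn_neqAle eq_sym n1.
    by rewrite -area_cyc; apply: ccw_pos.
  - have l : (s < i)%N by rewrite ltn_neqAle n2.
    by rewrite area_cyc; apply: ccw_pos.
split; first exact: ltW.
by move=> e; move: h; rewrite e ltxx.
Qed.

Lemma consist (i j k i' j' k' : 'I_n) a :
  in_T delta (i, j, k) -> in_T delta (i', j', k') ->
  tri_set v (i, j, k) a -> tri_set v (i', j', k') a ->
  forall m, areal v (i, j, k) m a = areal v (i', j', k') m a.
Proof.
case: (eqVneq (i, j, k) (i', j', k')) => [[-> -> ->] // | hne].
move=> T T' ha ha'.
have hT := T; have hT' := T'.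
case/and5P: hT => hij hjk _ _ _; case/and5P: hT' => hij' hjk' _ _ _.
have [L0 L1 La L4] := areal_props hij hjk ha.
have [M0 M1 Ma M4] := areal_props hij' hjk' ha'.
have D : 0 < area (v i) (v j) (v k) by apply: ccw_pos.
have D2 : 0 < area (v j) (v k) (v i) by rewrite -area_cyc.
have D3 : 0 < area (v k) (v i) (v j) by rewrite -area_cyc -area_cyc.
have hik : (i < k)%N by apply: ltn_trans hjk.
case: (arcs T T' hne) => [/andP [h1 h2] | /andP [h1 h2] | /and3P [h1 h2 h3]].
- apply: (consist_gen (p := i) (q := j)) L0 L1 La M0 M1 Ma _ _.
  + by rewrite neq_ltn hij.
  + by apply/eqP => e; move: D; rewrite e area_pp ltxx.
  + by move=> m /L4; apply: HL_gen.
  + move=> m /M4 /or3P [] /eqP -> ; apply: side1; apply/andP; split; lia.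
- apply: (consist_gen (p := j) (q := k)) L0 L1 La M0 M1 Ma _ _.
  + by rewrite neq_ltn hjk.
  + by apply/eqP => e; move: D2; rewrite e area_pp ltxx.
  + move=> m /L4 hm; apply: (HL_gen (r := i)) => //.
    by case/or3P: hm => ->; rewrite ?orbT.
  + move=> m /M4 /or3P [] /eqP -> ; apply: side1; apply/andP; split; lia.
- apply: (consist_gen (p := k) (q := i)) L0 L1 La M0 M1 Ma _ _.
  + by rewrite neq_ltn hik orbT.
  + by apply/eqP => e; move: D3; rewrite e area_pp ltxx.
  + move=> m /L4 hm; apply: (HL_gen (r := j)) => //.
    by case/or3P: hm => ->; rewrite ?orbT.
  + by move=> m /M4 /or3P [] /eqP -> ; apply: side3.
Qed.


Lemma chord_gap (c : 'I_n * 'I_n) : c \in delta ->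
  (c.1.+2 <= c.2)%N /\ ~ ((c.1 = 0 :> nat) /\ (c.2 = n.-1 :> nat)).
Proof.
have [_ [hch _]] := hdec.
move=> /hch /andP [hlt hadj]; have h2 := ltn_ord c.2.
split.
- rewrite ltn_neqAle hlt andbT; apply/negP => /eqP e.
  move/negP: hadj; apply; rewrite /adjacent; apply/orP; left.
  by apply/eqP; rewrite modn_small; lia.
- move=> [e1 e2]; move/negP: hadj; apply; rewrite /adjacent; apply/orP; right.
  have -> : (c.2).+1 = n by lia.
  by rewrite modnn e1.
Qed.

Definition G (p q : 'I_n) := [set c in delta | (p <= c.1)%N && (c.2 <= q)%N].
Definition F (p q : 'I_n) := G p q :\ (p, q).

Lemma cardG (p q : 'I_n) : #|G p q| = (((p, q) \in delta) + #|F p q|)%N.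
Proof. by rewrite /F (cardsD1 (p, q)) !inE /= !leqnn !andbT. Qed.

Definition Bnd (p q : 'I_n) :=
  (#|F p q| <= q - p - 2)%N /\ (#|F p q| = (q - p - 2)%N ->
   exists r : 'I_n, [/\ (p < r < q)%N, dec_edge delta p r, dec_edge delta r q,
      ((2 <= r - p)%N -> #|F p r| = (r - p - 2)%N) &
      ((2 <= q - r)%N -> #|F r q| = (q - r - 2)%N)]).

Lemma dec_adj (r q : 'I_n) : q = r.+1 :> nat -> dec_edge delta r q.
Proof.
move=> e; rewrite /dec_edge /adjacent; apply/orP; left; apply/orP; left; apply/orP; left.
by rewrite modn_small -e.
Qed.

Lemma dec_in (r q : 'I_n) : (r < q)%N -> (r, q) \in delta -> dec_edge delta r q.
Proof. by move=> h1 h2; rewrite /dec_edge h1 h2 /= orbT. Qed.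

Lemma Hlem (r q : 'I_n) : (r < q)%N -> ((2 <= q - r)%N -> Bnd r q) ->
  (#|G r q| <= q - r - 1)%N /\ (#|G r q| = (q - r - 1)%N ->
    dec_edge delta r q /\ ((2 <= q - r)%N -> #|F r q| = (q - r - 2)%N)).
Proof.
move=> hrq hB.
case: (ltnP (q - r) 2) => hd.
- have e : q = r.+1 :> nat by lia.
  have G0 : G r q = set0.
    apply/setP => -[c1 c2]; rewrite !inE /=; apply/negP => /andP [hc /andP [h1 h2]].
    have [/= g _] := chord_gap hc; clear -g h1 h2 e; lia.
  rewrite G0 cards0; split; first by [].
  by move=> _; split; [apply: dec_adj | lia].
- have [b1 b2] := hB hd.
  rewrite cardG; set k := #|F r q| in b1 b2 *.
  case: (boolP ((r, q) \in delta)) => hin /=.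
  + split; first by clear -b1 hd; lia.
    by move=> h; split; [apply: dec_in | move=> _; clear -h; lia].
  + split; first by clear -b1 hd; lia.
    by move=> h; clear -b1 h hd; lia.
Qed.


Lemma bound d : forall p q : 'I_n, (q - p <= d)%N -> (p < q)%N -> (2 <= q - p)%N -> Bnd p q.
Proof.
elim: d => [|d IH] p q hd hpq h2; first by lia.
have hqn := ltn_ord q.
pose S := [set c in delta | (c.1 == p) && (c.2 < q)%N].
case: (set_0Vmem S) => [S0 | [c0 hc0]].
- have hr : (p.+1 < n)%N by lia.
  pose r := Ordinal hr.
  have sub : F p q \subset G r q.
    apply/subsetP => -[c1 c2]; rewrite /F /G !inE /= => /andP [hne /andP [hc /andP [h1 h2']]].
    change (ordinal n) in c1; change (ordinal n) in c2.
    rewrite hc h2' andbT /= ltn_neqAle h1 andbT.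
    apply/negP => /eqP e1.
    have e1' : c1 = p by apply: ord_inj; rewrite e1.
    have hlt : (c2 < q)%N.
      rewrite ltn_neqAle h2' andbT; apply/negP => /eqP e2.
      have e2' : c2 = q by apply: ord_inj.
      by move: hne; rewrite e1' e2' eqxx.
    have : (c1, c2) \in S by rewrite inE /= hc e1' eqxx hlt.
    by rewrite S0 inE.
  have hrq : (r < q)%N by rewrite /= ; lia.
  have [g1 g2] := Hlem hrq (fun h => IH r q ltac:(rewrite /=; lia) hrq h).
  have le1 := subset_leq_card sub.
  split; first by move: le1 g1 => /=; lia.
  move=> he.
  have hG : #|G r q| = (q - r - 1)%N.
    apply/eqP; rewrite eqn_leq g1 /=; move: le1 he => /=; lia.
  have [er ef] := g2 hG.
  exists r; split => //.
  + by apply/andP; split => //=; lia.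
  + by apply: dec_adj.
  + by move=> /=; lia.
- have [[p' r] hcm hmax] := @arg_maxnP _ c0 (mem S) (fun c => nat_of_ord c.2) hc0.
  have hcm' : (p', r) \in S := hcm; move: hcm'; rewrite inE /= => /andP [hpr /andP [/eqP ep hrq]]; subst p'.
  have [/= gap _] := chord_gap hpr.
  have hpr' : (p < r)%N by lia.
  have sub : F p q \subset G p r :|: G r q.
    apply/subsetP => -[c1 c2]; rewrite /F /G !inE /= => /andP [hne /andP [hc /andP [h1 h2']]].
    change (ordinal n) in c1; change (ordinal n) in c2.
    case: (leqP c2 r) => hc2; first by rewrite hc h1.
    case: (leqP r c1) => hc1; first by rewrite hc h2' orbT.
    exfalso.
    case: (eqVneq c1 p) => [e1|n1].
    + have hlt : (c2 < q)%N.
        rewrite ltn_neqAle h2' andbT; apply/negP => /eqP e2.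
        have e2' : c2 = q by apply: ord_inj.
        by move: hne; rewrite e1 e2' eqxx.
      have : (c1, c2) \in S by rewrite inE /= hc e1 eqxx hlt.
      by move/hmax => /=; lia.
    + have hpc : (p < c1)%N by rewrite ltn_neqAle eq_sym n1 h1.
      have hcc : (c1 < c2)%N by apply: ltn_trans hc2.
      exact: (NI (dec_in hpr' hpr) (dec_in hcc hc) hpc hc1 hc2).
  have le1 := subset_leq_card sub.
  have le2 : (#|G p r :|: G r q| <= #|G p r| + #|G r q|)%N by rewrite cardsU leq_subr.
  have cG := cardG p r; rewrite hpr /= in cG.
  have [b1 b2] := IH p r ltac:(lia) hpr' ltac:(lia).
  have [g1 g2] := Hlem hrq (fun h => IH r q ltac:(lia) hrq h).
  move: le1 le2 cG b1 b2 g1 g2.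
  set kF := #|F p q|; set kU := #|G p r :|: G r q|; set kGpr := #|G p r|.
  set kFpr := #|F p r|; set kGrq := #|G r q|.
  move=> le1 le2 cG b1 b2 g1 g2.
  split; first by clear -le1 le2 cG b1 g1 gap hpr' hrq; lia.
  move=> he.
  have e1 : kFpr = (r - p - 2)%N by clear -le1 le2 cG b1 g1 gap hpr' hrq he; lia.
  have e2 : kGrq = (q - r - 1)%N by clear -le1 le2 cG b1 g1 gap hpr' hrq he; lia.
  have [er ef] := g2 e2.
  exists r; split => //.
  + by rewrite hpr' hrq.
  + by apply: dec_in.
Qed.


Lemma poly_area (p q : 'I_n) x : polygon v x ->
  (forall i, area (v p) (v i) (v q) <= 0) -> area (v p) x (v q) <= 0.
Proof.
case=> l [l0 [l1 ->]] h; rewrite area_aff //.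
by apply: sumr_le0 => i _; rewrite mulr_ge0_le0.
Qed.

Lemma poly_area' (p q : 'I_n) x : polygon v x ->
  (forall i, 0 <= area (v p) (v i) (v q)) -> 0 <= area (v p) x (v q).
Proof.
case=> l [l0 [l1 ->]] h; rewrite area_aff //.
by apply: sumr_ge0 => i _; rewrite mulr_ge0.
Qed.

Lemma edge_nonpos (p r : 'I_n) x : r = p.+1 :> nat -> polygon v x ->
  area (v p) x (v r) <= 0.
Proof.
move=> e hx; apply: poly_area => // i.
case: (eqVneq i p) => [->|n1]; first by rewrite area_pp.
case: (eqVneq i r) => [->|n2]; first by rewrite area_qq.
rewrite area_swap oppr_le0 ltW //.
case: (ltngtP i p) => h.
- by rewrite -area_cyc; apply: ccw_pos => //; rewrite e.
- have : (r < i)%N.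
    rewrite ltn_neqAle eq_sym n2 /= e; exact: h.
  by move=> h'; apply: ccw_pos => //; rewrite e.
- by move: n1; rewrite (ord_inj h) eqxx.
Qed.

Lemma tri_in (p r q : 'I_n) x : 0 < area (v p) (v r) (v q) ->
  area (v p) x (v r) <= 0 -> area (v r) x (v q) <= 0 -> 0 <= area (v p) x (v q) ->
  tri_set v (p, r, q) x.
Proof.
move=> hD h1 h2 h3.
have hD0 : area (v p) (v r) (v q) != 0 by rewrite gt_eqF.
set D := area (v p) (v r) (v q) in hD hD0.
exists (fun t : 'I_3 => [:: - area (v r) x (v q) / D; area (v p) x (v q) / D;
   - area (v p) x (v r) / D]`_t).
split; [|split].
- move=> t; case: t => [[|[|[|t]]] Ht] //=; apply: divr_ge0; rewrite ?oppr_ge0 //; exact: ltW.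
- rewrite sum3 /=; move: hD0; rewrite /D !areaE => hD0; field.
  by apply/eqP => h; move/eqP: hD0; apply; lra.
- rewrite sum3 /=; apply: rv2_eq; rewrite !mxE; move: hD0; rewrite /D !areaE => hD0; field;
  by apply/eqP => h; move/eqP: hD0; apply; lra.
Qed.

Lemma cover d : forall p q : 'I_n, (q - p <= d)%N -> (p < q)%N -> (2 <= q - p)%N ->
  #|F p q| = (q - p - 2)%N -> dec_edge delta p q ->
  forall x, polygon v x -> 0 <= area (v p) x (v q) ->
  exists t, in_T delta t /\ tri_set v t x.
Proof.
elim: d => [|d IH] p q hd hpq h2 hF epq x hx hax; first by lia.
have [_ b2] := bound (leqnn (q - p)) hpq h2.
have [r [/andP [hpr hrq] epr erq fpr frq]] := b2 hF.
case: (ltrP 0 (area (v p) x (v r))) => a1.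
  have hrp : (2 <= r - p)%N.
    case: (ltnP (r - p) 2) => // hlt.
    have := edge_nonpos (p := p) (r := r) ltac:(lia) hx.
    by rewrite leNgt a1.
  exact: (IH p r ltac:(lia) hpr hrp (fpr hrp) epr x hx (ltW a1)).
case: (ltrP 0 (area (v r) x (v q))) => a2.
  have hqr : (2 <= q - r)%N.
    case: (ltnP (q - r) 2) => // hlt.
    have := edge_nonpos (p := r) (r := q) ltac:(lia) hx.
    by rewrite leNgt a2.
  exact: (IH r q ltac:(lia) hrq hqr (frq hqr) erq x hx (ltW a2)).
exists (p, r, q); split.
  by rewrite /in_T hpr hrq epr erq epq.
by apply: tri_in => //; apply: ccw_pos.
Qed.


Definition Pin (l : seq (tri n)) (a : 'rV[R]_2) := exists2 t, t \in l & tri_set v t a.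

Lemma aux_val (m : 'I_n) (beta : R) a (s prev : seq (tri n)) :
  (forall t, t \in s -> tri_set v t a -> areal v t m a = beta) ->
  chordal_aux v m prev s a =
  if `[< Pin prev a >] then 0 else if `[< Pin s a >] then beta else 0.
Proof.
elim: s prev => [|t s IH] prev hs /=.
  have -> : `[< Pin [::] a >] = false by apply: asboolF => -[t].
  by case: ifP.
rewrite IH; last by move=> t' ht'; apply: hs; rewrite inE ht' orbT.
rewrite /ind.
case: (asboolP (Pin prev a)) => hp.
  have -> : `[< Pin (rcons prev t) a >] = true.
    by apply: asboolT; case: hp => t' ht' h; exists t' => //; rewrite mem_rcons inE ht' orbT.
  case: (asboolP (tri_set v t a)) => ht.
    have -> : `[< tri_set v t a /\ (exists2 t' : tri n, t' \in prev & tri_set v t' a) >] = true.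
      by apply: asboolT.
    by rewrite add0r subrr.
  have -> : `[< tri_set v t a /\ (exists2 t' : tri n, t' \in prev & tri_set v t' a) >] = false.
    by apply: asboolF => -[].
  by rewrite !mul0r subrr addr0.
have -> : `[< tri_set v t a /\ (exists2 t' : tri n, t' \in prev & tri_set v t' a) >] = false.
  by apply: asboolF => -[_ h]; apply: hp.
case: (asboolP (tri_set v t a)) => ht.
  have -> : `[< Pin (rcons prev t) a >] = true.
    by apply: asboolT; exists t => //; rewrite mem_rcons inE eqxx.
  have -> : `[< Pin (t :: s) a >] = true.
    by apply: asboolT; exists t => //; rewrite inE eqxx.
  by rewrite mul0r subr0 mul1r add0r; apply: hs => //; rewrite inE eqxx.
have -> : `[< Pin (rcons prev t) a >] = false.
  apply: asboolF => -[t' ht' h]; move: ht'; rewrite mem_rcons inE => /orP [/eqP e|h'].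
    by apply: ht; rewrite -e.
  by apply: hp; exists t'.
have -> : `[< Pin (t :: s) a >] = `[< Pin s a >].
  apply/asboolP/asboolP => -[t' ht' h]; last by exists t' => //; rewrite inE ht' orbT.
  move: ht'; rewrite inE => /orP [/eqP e|h'].
    by exfalso; apply: ht; rewrite -e.
  by exists t'.
by rewrite !mul0r subr0 addr0.
Qed.


Lemma main_sec (e : 'I_n -> seq (tri n)) :
  (3 <= n)%N ->
  (forall m, enumerates v delta m (e m)) ->
  forall a : 'rV[R]_2, polygon v a ->
    \sum_(m < n) chordal_coord v m (e m) a = 1 /\
    a = \sum_(m < n) chordal_coord v m (e m) a *: v m.
Proof.
move=> hn henum a ha.
have h0 : (0 < n)%N by lia.
have h1 : (n.-1 < n)%N by lia.
pose p0 := Ordinal h0; pose q0 := Ordinal h1.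
have hpq : (p0 < q0)%N by rewrite /=; lia.
have hF : #|F p0 q0| = (q0 - p0 - 2)%N.
  have eG : G p0 q0 = delta.
    apply/setP => -[c1 c2]; rewrite /G inE /=.
    change (ordinal n) in c2; have hc : (c2 <= n.-1)%N by have := ltn_ord c2; lia.
    by rewrite hc andbT.
  have nin : (p0, q0) \notin delta.
    by apply/negP => /chord_gap [_ []].
  have := cardG p0 q0; rewrite eG (negbTE nin) add0n => <-.
  by have [-> _] := hdec; rewrite /=; lia.
have epq : dec_edge delta p0 q0.
  rewrite /dec_edge /adjacent; apply/orP; left; apply/orP; left; apply/orP; right.
  by rewrite /= (ltn_predK h0) modnn.
have hax : 0 <= area (v p0) a (v q0).
  apply: poly_area' => // i; have [] := side1 (x := p0) (y := q0) (s := i) => //.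
  by rewrite /=; have := ltn_ord i; lia.
have [[[i0 j0] k0] [T0 H0]] := cover (leqnn _) hpq ltac:(rewrite /=; lia) hF epq ha hax.
have hT0 := T0; case/and5P: hT0 => hij hjk _ _ _.
have [L0 L1 La L4] := areal_props hij hjk H0.
have key : forall m, chordal_coord v m (e m) a = areal v (i0, j0, k0) m a.
  move=> m; rewrite /chordal_coord (@aux_val m (areal v (i0, j0, k0) m a)).
  - have -> : `[< Pin [::] a >] = false by apply: asboolF => -[t].
    case: (asboolP (Pin (e m) a)) => // hP.
    case: (eqVneq (areal v (i0, j0, k0) m a) 0) => [-> // | /L4 hm]; exfalso.
    apply: hP; exists (i0, j0, k0) => //.
    have [_ ->] := henum m; split => //.
    have [t1 t2 t3] := tri_vert i0 j0 k0.
    by case/or3P: hm => /eqP ->.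
  - move=> [[i j] k] ht hta.
    have [_ /(_ (i, j, k)) [/(_ ht) [Tt _] _]] := henum m.
    exact: consist Tt T0 hta H0 m.
under eq_bigr do rewrite key.
split; first by [].
by under eq_bigr do rewrite key.
Qed.

End Poly.

Theorem theorem7p14 (R : realFieldType) (n : nat) (v : 'I_n -> 'rV[R]_2)
  (delta : {set 'I_n * 'I_n}) (e : 'I_n -> seq (tri n)) :
  (3 <= n)%N ->
  ccw_convex_position v ->
  chordal_decomposition v delta ->
  (forall m, enumerates v delta m (e m)) ->
  forall a : 'rV[R]_2, polygon v a ->
    \sum_(m < n) chordal_coord v m (e m) a = 1 /\
    a = \sum_(m < n) chordal_coord v m (e m) a *: v m.
Proof.
move=> hn hccw hdec henum a ha.
exact: (main_sec hccw hdec hn henum ha).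
Qed.
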